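(* Let $(q_n)_{n \ge 1}$ be a sequence of positive rational numbers, and let $(p_n)_{n \ge 1}$ be a sequence of prime numbers such that, for every $n \in \mathbb{N}$, $p_n \mid \mathsf{d}(q_n)$ and $p_n \nmid \mathsf{d}(q_k)$ for every $k \in \mathbb{N}$ with $k \neq n$. Then the Puiseux monoid $M = \langle q_n \mid n \in \mathbb{N} \rangle$ is atomic and its set of atoms is $\mathcal{A}(M) = \{ q_n \mid n \in \mathbb{N} \}$.
   Context: For a positive rational $r = n/d$ with $n,d \in \mathbb{N}$ and $\gcd(n,d)=1$, write $\mathsf{n}(r) := n$ and $\mathsf{d}(r) := d$. A Puiseux monoid is an additive submonoid of $(\mathbb{Q}_{\ge 0},+)$; $\langle S \rangle$ denotes the submonoid generated by $S$. An atom of a (reduced, additive) monoid $M$ is a nonzero element $a$ such that $a = x + y$ with $x,y \in M$ implies $x = 0$ or $y = 0$; $\mathcal{A}(M)$ is the set of atoms. $M$ is atomic if every element of $M$ is a sum of finitely many atoms (the empty sum being $0$). *)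

(* Defs.v *)
From mathcomp Require Import all_boot all_order all_algebra.
Set Implicit Arguments. Unset Strict Implicit. Unset Printing Implicit Defensive.
Import Order.TTheory GRing.Theory Num.Theory.
Local Open Scope ring_scope.

(* d(r): the denominator of r in lowest terms, as a natural number
   (mathcomp's [denq r] is the positive reduced denominator). *)
Definition dnat (r : rat) : nat := `|denq r|%N.

Definition gen_monoid (S : rat -> Prop) (x : rat) : Prop :=
  exists s : seq rat, (forall a, a \in s -> S a) /\ x = \sum_(a <- s) a.

Definition is_atom (M : rat -> Prop) (a : rat) : Prop :=
  M a /\ a != 0 /\
  forall x y, M x -> M y -> a = x + y -> x = 0 \/ y = 0.

Definition atomic (M : rat -> Prop) : Prop :=
  forall x, M x ->
    exists s : seq rat, (forall a, a \in s -> is_atom M a) /\ x = \sum_(a <- s) a.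

(* Main.v *)
Require Import Defs.
From mathcomp Require Import all_boot all_order all_algebra.
From mathcomp Require Import lra.
Import Order.TTheory GRing.Theory Num.Theory.
Local Open Scope ring_scope.

Lemma den_dvd (x : rat) (d z : int) : x * d%:~R = z%:~R -> (`|denq x| %| `|d|)%N.
Proof.
move=> h.
have e : z * denq x = numq x * d.
  apply: (@intr_inj rat); rewrite !rmorphM /= numqE -h.
  by rewrite mulrAC.
have : (`|denq x| %| `|numq x| * `|d|)%N.
  by rewrite -abszM -e abszM dvdn_mull.
by rewrite Gauss_dvdr // coprime_sym coprime_num_den.
Qed.

Lemma ndiv_add (p : nat) (a b : rat) : prime p ->
  ~~ (p %| dnat a)%N -> ~~ (p %| dnat b)%N -> ~~ (p %| dnat (a + b))%N.
Proof.
move=> pp ha hb; apply/negP => hab.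
have hd : (dnat (a + b) %| `|(denq a * denq b)%R|)%N.
  apply: (@den_dvd _ _ (numq a * denq b + numq b * denq a)).
  rewrite rmorphM rmorphD !rmorphM /= !numqE mulrDl.
  by rewrite mulrA [_ * (denq b)%:~R]mulrC !mulrA.
have := dvdn_trans hab hd; rewrite abszM Euclid_dvdM //.
by rewrite /dnat in ha hb; rewrite (negbTE ha) (negbTE hb).
Qed.

Lemma decomp (q : nat -> rat) (p : nat -> nat)
  (hq : forall n, (0 < n)%N -> 0 < q n)
  (hp : forall n, (0 < n)%N -> prime (p n))
  (hndiv : forall n k, (0 < n)%N -> (0 < k)%N -> k <> n -> ~~ (p n %| dnat (q k))%N)
  n (hn : (0 < n)%N) (s : seq rat) :
  (forall a, a \in s -> exists2 k, (0 < k)%N & a = q k) ->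
  exists m : nat, exists T, \sum_(a <- s) a = m%:R * q n + T /\ 0 <= T /\
     ~~ (p n %| dnat T)%N.
Proof.
elim: s => [|b s IH] hs.
  exists 0%N, 0; rewrite big_nil mul0r add0r; split=> //; split=> //.
  have -> : dnat 0 = 1%N by []. rewrite dvdn1; apply/negP => /eqP h1.
  by have := prime_gt1 (hp n hn); rewrite h1.
have [m [T [e [T0 TP]]]] : exists m : nat, exists T, \sum_(a <- s) a = m%:R * q n + T /\ 0 <= T /\
     ~~ (p n %| dnat T)%N.
  by apply: IH => a ha; apply: hs; rewrite inE ha orbT.
have [k k0 ->] := hs b (mem_head _ _).
rewrite big_cons e.
case: (eqVneq k n) => [->|kn].
  exists m.+1, T; split; last by split.
  by rewrite -natr1 mulrDl mul1r addrA [q n + _]addrC.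
exists m, (q k + T); split; first by rewrite addrCA.
split; first by have := hq k k0; lra.
apply: ndiv_add => //; first exact: hp.
by apply: hndiv => // /eqP; rewrite (negbTE kn).
Qed.

Theorem proposition3p5 (q : nat -> rat) (p : nat -> nat)
  (hq : forall n, (0 < n)%N -> 0 < q n)
  (hp : forall n, (0 < n)%N -> prime (p n))
  (hdiv : forall n, (0 < n)%N -> (p n %| dnat (q n))%N)
  (hndiv : forall n k, (0 < n)%N -> (0 < k)%N -> k <> n -> ~~ (p n %| dnat (q k))%N) :
  let M := gen_monoid (fun x => exists2 n, (0 < n)%N & x = q n) in
  atomic M /\
  (forall a, is_atom M a <-> exists2 n, (0 < n)%N & a = q n).
Proof.
move=> M.
have gen_atom : forall n, (0 < n)%N -> is_atom M (q n).
  move=> n hn; split.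
    by exists [:: q n]; split; [move=> a; rewrite inE => /eqP ->; exists n | rewrite big_seq1].
  split; first by rewrite gt_eqF // hq.
  move=> x y [sx [hsx ex]] [sy [hsy ey]] exy.
  have [mx [Tx [ex' [Tx0 TxP]]]] := @decomp _ _ hq hp hndiv _ hn _ hsx.
  have [my [Ty [ey' [Ty0 TyP]]]] := @decomp _ _ hq hp hndiv _ hn _ hsy.
  have qn0 := hq n hn.
  rewrite ex ey ex' ey' in exy *.
  case: mx exy {ex'} => [|mx]; case: my {ey'} => [|my] exy.
  - exfalso; move: (@ndiv_add _ _ _ (hp n hn) TxP TyP).
    by rewrite !mul0r !add0r in exy; rewrite -exy (hdiv n hn).
  - left; rewrite mul0r add0r.
    have : 0 <= my%:R * q n by rewrite mulr_ge0 // ltW.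
    move: exy; rewrite mul0r add0r -natr1 mulrDl mul1r; lra.
  - right; rewrite mul0r add0r.
    have : 0 <= mx%:R * q n by rewrite mulr_ge0 // ltW.
    move: exy; rewrite mul0r add0r -natr1 mulrDl mul1r; lra.
  - exfalso.
    have : 0 <= mx%:R * q n by rewrite mulr_ge0 // ltW.
    have : 0 <= my%:R * q n by rewrite mulr_ge0 // ltW.
    move: exy; rewrite -!natr1 !mulrDl !mul1r; lra.
have iff : forall a, is_atom M a <-> exists2 n, (0 < n)%N & a = q n.
  move=> a; split; last by case=> n hn ->; exact: gen_atom.
  case=> [[s [hs ->]] [a0 ha]].
  case: s hs a0 ha => [|b s] hs a0 ha; first by rewrite big_nil eqxx in a0.
  have [k k0 eb] := hs b (mem_head _ _).
  have Mb : M b by exists [:: b]; split; [move=> c; rewrite inE => /eqP ->; apply: hs; exact: mem_head | rewrite big_seq1].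
  have Ms : M (\sum_(c <- s) c) by exists s; split=> // c cs; apply: hs; rewrite inE cs orbT.
  case: (ha _ _ Mb Ms); first by rewrite big_cons.
    by move=> b0; have := hq k k0; rewrite -eb b0 ltxx.
  by move=> s0; exists k => //; rewrite big_cons s0 addr0.
split=> // x [s [hs ->]]; exists s; split=> // a /hs [n hn ->]; exact: gen_atom.
Qed.
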